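(* Let $s,r,t,\ell,m$ be integers with $1 \le s \le r \le \ell \le m$ and $1 \le t < \ell$. Then $$\hat{w}_r(t;\ell,m)-\hat{w}_s(t;\ell,m)=q^t\bigl(\hat{\mathfrak w}_{r-1}(t;\ell-1,m-1)-\hat{\mathfrak w}_{s-1}(t;\ell-1,m-1)\bigr).$$ In particular $\hat{w}_r(t;\ell,m)-\hat{w}_1(t;\ell,m)=q^t\,\hat{\mathfrak w}_{r-1}(t;\ell-1,m-1)$.
   Context: $q$ is a prime power. For an $a\times b$ matrix $M=(m_{ij})$ and $0\le r\le a$, $\tau_r(M)=m_{11}+\cdots+m_{rr}$ ($\tau_0=0$). $\mathfrak w_r(t;a,b)$ is the number of $a\times b$ matrices over $\mathbb{F}_q$ of rank exactly $t$ with $\tau_r(M)\ne0$, and $\hat{\mathfrak w}_r(t;a,b)=\mathfrak w_r(t;a,b)/(q-1)$. Also $\hat{w}_r(t;\ell,m)=\sum_{s=1}^t\hat{\mathfrak w}_r(s;\ell,m)$, i.e. $\frac{1}{q-1}$ times the number of $\ell\times m$ matrices $M$ over $\mathbb{F}_q$ with $1\le\mathrm{rk}(M)\le t$ and $\tau_r(M)\ne 0$. *)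

(* Defs.v *)
From HB Require Import structures.
From mathcomp Require Import all_boot all_order all_algebra all_field.
Set Implicit Arguments. Unset Strict Implicit. Unset Printing Implicit Defensive.
Import GRing.Theory Num.Theory.
Local Open Scope ring_scope.

Definition tau (F : fieldType) (a b r : nat) (M : 'M[F]_(a, b)) : F :=
  \sum_(i < a | (i < r)%N) \sum_(j < b | (j : nat) == (i : nat)) M i j.

Definition frakw (F : finFieldType) (r t a b : nat) : nat :=
  #|[set M : 'M[F]_(a, b) | (\rank M == t) && (tau r M != 0)]|.

Definition hfrakw (F : finFieldType) (r t a b : nat) : rat :=
  (frakw F r t a b)%:R / (#|F|.-1)%:R.

Definition hw (F : finFieldType) (r t l m : nat) : rat :=
  \sum_(1 <= s < t.+1) hfrakw F r s l m.

(* Main.v *)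
Require Import Defs.
From HB Require Import structures.
From mathcomp Require Import all_boot all_order all_algebra all_field.
Set Implicit Arguments. Unset Strict Implicit. Unset Printing Implicit Defensive.
Import GRing.Theory Num.Theory.
Local Open Scope ring_scope.
Section Ranks.
Variable F : fieldType.

Lemma rank_unit_mull n p (L : 'M[F]_n) (A : 'M_(n,p)) :
  L \in unitmx -> \rank (L *m A) = \rank A.
Proof.
move=> uL; apply/eqP; rewrite eqn_leq (mxrankM_maxr L A) /=.
have H := mxrankM_maxr (invmx L) (L *m A).
by rewrite mulmxA mulVmx // mul1mx in H.
Qed.

Lemma rank_unit_mulr n p (R : 'M[F]_p) (A : 'M_(n,p)) :
  R \in unitmx -> \rank (A *m R) = \rank A.
Proof. by move=> uR; rewrite mxrankMfree // row_free_unit. Qed.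

Lemma rank_scalar1 (b : F) : \rank (b%:M : 'M[F]_1) = (b != 0).
Proof.
have [->|nz] := eqVneq b 0; first by rewrite raddf0 mxrank0.
by rewrite mxrank_unit // unitmxE det_scalar1 unitfE.
Qed.

Lemma rank_R1 n1 n2 (a : F) (u : 'M_(1, n2)) (v : 'M_(n1, 1)) (N : 'M_(n1, n2)) :
  ~~ (u <= N)%MS -> \rank (block_mx a%:M u v N) = \rank (block_mx 0 u v N).
Proof.
rewrite submxE => nz.
have [j hj] : exists j, (u *m cokermx N) 0 j != 0.
  apply/existsP; move: nz; apply: contraR; rewrite negb_exists => /forallP H.
  apply/eqP/matrixP => i k; rewrite [RHS]mxE ord1; move: (H k).
  by rewrite negbK => /eqP.
set y := col j (cokermx N).
have Ny : N *m y = 0 by rewrite /y colE mulmxA mulmx_coker mul0mx.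
have uy : (u *m y) 0 0 = (u *m cokermx N) 0 j by rewrite /y colE mulmxA -colE mxE.
set k := a / (u *m y) 0 0.
set R := block_mx (1 : 'M_1) 0 (- k *: y) 1.
have uR : R \in unitmx by rewrite unitmxE det_lblock !det1 mulr1 unitr1.
rewrite -(rank_unit_mulr _ uR) mulmx_block.
rewrite ?mulmx0 ?mulmx1 ?mul1mx ?addr0 -?scalemxAr ?Ny ?scaler0 ?addr0 ?add0r.
idtac.
congr (\rank (block_mx _ _ _ _)).
rewrite [u *m y]mx11_scalar scale_scalar_mx.
rewrite /k mulNr divfK ?uy // -raddfD /= subrr.
by rewrite raddf0.
Qed.

Lemma rank_R2 n1 n2 (a : F) (u : 'M_(1, n2)) (v : 'M_(n1, 1)) (N : 'M_(n1, n2)) :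
  ~~ (v^T <= N^T)%MS -> \rank (block_mx a%:M u v N) = \rank (block_mx 0 u v N).
Proof.
move=> h; rewrite -mxrank_tr tr_block_mx tr_scalar_mx rank_R1 //.
by rewrite -(mxrank_tr (block_mx 0 u v N)) tr_block_mx trmx0.
Qed.

Lemma rank_R3 n1 n2 (a : F) (x : 'M_(1, n1)) (y : 'M_(n2, 1)) (N : 'M_(n1, n2)) :
  \rank (block_mx a%:M (x *m N) (N *m y) N) =
  addn (a != (x *m N *m y) 0 0) (\rank N).
Proof.
set b := a - (x *m N *m y) 0 0.
set L := block_mx (1 : 'M_1) x 0 1.
set R := block_mx (1 : 'M_1) 0 y 1.
have uL : L \in unitmx by rewrite unitmxE det_ublock !det1 mulr1 unitr1.
have uR : R \in unitmx by rewrite unitmxE det_lblock !det1 mulr1 unitr1.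
have -> : block_mx a%:M (x *m N) (N *m y) N = L *m block_mx b%:M 0 0 N *m R.
  rewrite !mulmx_block ?mulmx0 ?mulmx1 ?mul1mx ?mul0mx ?addr0 ?add0r ?mulmx0 ?mulmx1 ?mul1mx.
  congr block_mx.

  rewrite [x *m N *m y]mx11_scalar -raddfD /= /b subrK //.
rewrite rank_unit_mulr // rank_unit_mull // rank_diag_block_mx rank_scalar1.
by rewrite /b subr_eq0.
Qed.
End Ranks.
Section Blk.
Variables (F : fieldType) (n1 n2 : nat) (a : F) (u : 'M[F]_(1, n2)) (v : 'M[F]_(n1, 1)) (N : 'M[F]_(n1, n2)).
Lemma blk00 : (block_mx a%:M u v N : 'M_(n1.+1, n2.+1)) ord0 ord0 = a.
Proof.
rewrite /block_mx !mxE; case: splitP => [i _|i //].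
rewrite mxE; case: splitP => [j _|j //].
by rewrite !ord1 mxE eqxx.
Qed.
Lemma blkdr i j : (block_mx a%:M u v N : 'M_(n1.+1, n2.+1)) (lift ord0 i) (lift ord0 j) = N i j.
Proof.
rewrite /block_mx !mxE; case: splitP => k Hk; first by move: Hk; rewrite ord1.
rewrite mxE; case: splitP => l Hl; first by move: Hl; rewrite ord1.
move: Hk Hl; rewrite /= /bump /= !add1n => -[Hk] [Hl].
by congr (N _ _); apply/val_inj.

Qed.
End Blk.

Lemma tau_block (F : fieldType) n1 n2 r (a : F) (u : 'M[F]_(1, n2)) (v : 'M[F]_(n1, 1)) (N : 'M[F]_(n1, n2)) :
  (0 < r)%N ->
  tau r (block_mx a%:M u v N : 'M_(n1.+1, n2.+1)) = a + tau r.-1 N.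
Proof.
move=> r0; rewrite /tau big_mkcond big_ord_recl /= r0 big_mkcond big_ord_recl /=.
rewrite big1 ?addr0 // blk00; congr (_ + _).
rewrite [RHS]big_mkcond; apply: eq_bigr => i _.
case: r r0 => // r _ /=; rewrite /bump leq0n add1n ltnS.
case: ifP => // _; rewrite big_mkcond big_ord_recl /= big_mkcond.
rewrite add0r [RHS]big_mkcond; apply: eq_bigr => j _; rewrite /bump !leq0n !add1n eqSS.
by case: ifP => // _; rewrite blkdr.
Qed.

Section Count.
Variable F : finFieldType.
Local Notation q := #|F|.
Definition ind (b : bool) : rat := (b : nat)%:R.

Lemma sum_ind (T : finType) (P : pred T) :
  \sum_(i : T) ind (P i) = (#|[set i | P i]|)%:R.
Proof.
rewrite -sum1_card natr_sum [RHS]big_mkcond; apply: eq_bigr => i _.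
by rewrite inE /ind; case: (P i).
Qed.

Lemma shift_ne (c : F) : \sum_(a : F) ind (a + c != 0) = \sum_(a : F) ind (a != 0).
Proof.
rewrite (reindex_inj (addIr (- c))) /=; apply: eq_bigr => a _.
by rewrite subrK.
Qed.

Lemma sumD0 (c1 c2 : F) :
  \sum_(a : F) (ind (a + c1 != 0) - ind (a + c2 != 0)) = 0.
Proof. by rewrite sumrB !shift_ne subrr. Qed.


Lemma const_rank (n1 n2 t : nat) (N : 'M[F]_(n1,n2)) (u : 'M[F]_(1,n2)) (v : 'M[F]_(n1,1)) (c1 c2 : F) :
  (forall a, \rank (block_mx a%:M u v N) = \rank (block_mx 0 u v N)) ->
  \sum_(a:F) ind (\rank (block_mx a%:M u v N) <= t)%N *
     (ind (a + c1 != 0) - ind (a + c2 != 0)) = 0.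
Proof.
move=> H; under eq_bigr => a _ do rewrite H.
by rewrite -mulr_sumr sumD0 mulr0.
Qed.

Lemma inner (n1 n2 t : nat) (N : 'M[F]_(n1,n2)) (u : 'M[F]_(1,n2)) (v : 'M[F]_(n1,1)) (c1 c2 : F) :
  \sum_(a:F) ind (\rank (block_mx a%:M u v N) <= t)%N *
     (ind (a + c1 != 0) - ind (a + c2 != 0)) =
  ind [&& (u <= N)%MS, (v^T <= N^T)%MS & \rank N == t] *
    (ind ((u *m pinvmx N *m v) 0 0 + c1 != 0) -
     ind ((u *m pinvmx N *m v) 0 0 + c2 != 0)).
Proof.
have [P|nP] := boolP (u <= N)%MS; last first.
  by rewrite const_rank ?mul0r // => a; rewrite rank_R1.
have [Q|nQ] := boolP (v^T <= N^T)%MS; last first.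
  by rewrite const_rank ?mul0r // => a; rewrite rank_R2.
set x := u *m pinvmx N.
set y := (v^T *m pinvmx N^T)^T.
have ex : u = x *m N by rewrite mulmxKpV.
have ey : v = N *m y by rewrite -[N]trmxK -trmx_mul mulmxKpV // trmxK.
have Hr a : \rank (block_mx a%:M u v N) = addn (a != (x *m v) 0 0) (\rank N).
  by rewrite {1}ex {1}ey rank_R3 -mulmxA -ey.
under eq_bigr => a _ do rewrite Hr.
rewrite /=.
rewrite /=.
have [lt|ge] := ltnP (\rank N) t.
  rewrite (ltn_eqF lt) mul0r -[RHS](sumD0 c1 c2).
  apply: eq_bigr => a _; rewrite (_ : (_ <= t)%N = true) ?mul1r //.
  by case: (a != _); rewrite ?add1n ?add0n // ltnW.
have [eq|gt] := eqVneq (\rank N) t.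
  rewrite ?mul1r.
  rewrite (eq_bigr (fun a => if a == (x *m v) 0 0 then
     (ind (a + c1 != 0) - ind (a + c2 != 0)) else 0)); last first.
    move=> a _; rewrite eq; case: eqP => _ /=.
      by rewrite add0n leqnn mul1r.
    by rewrite add1n ltnn mul0r.
  by rewrite -big_mkcond big_pred1_eq.
rewrite ?mul0r big1 // => a _.
rewrite (_ : (_ <= t)%N = false) ?mul0r //; apply/negbTE; rewrite -ltnNge.
by apply: leq_trans (leq_addl _ _); rewrite ltn_neqAle eq_sym gt.
Qed.

Lemma sum_block n1 n2 (f : 'M[F]_(n1.+1, n2.+1) -> rat) :
  \sum_(M : 'M[F]_(n1.+1, n2.+1)) f M =
  \sum_(N : 'M[F]_(n1, n2)) \sum_(u : 'M[F]_(1, n2)) \sum_(v : 'M[F]_(n1, 1))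
    \sum_(a : F) f (block_mx a%:M u v N).
Proof.
rewrite !pair_big /=.
pose h (M : 'M[F]_(1 + n1, 1 + n2)) :=
  (((drsubmx M, ursubmx M), dlsubmx M), ulsubmx M 0 0).
pose g (p : ('M[F]_(n1, n2) * 'M[F]_(1, n2)) * 'M[F]_(n1, 1) * F) :
  'M[F]_(1 + n1, 1 + n2) := block_mx p.2%:M p.1.1.2 p.1.2 p.1.1.1.
rewrite (reindex h) /=; last first.
  exists g => [M _|p _].
    by rewrite /g /h /= -mx11_scalar submxK.
  case: p => [[[N u] v] a].
  by rewrite /g /h /= block_mxKdr block_mxKur block_mxKdl block_mxKul mxE eqxx.
apply: eq_bigr => M _; congr f.
by rewrite /h /= -mx11_scalar submxK.
Qed.

Lemma card_cols n1 n2 (N : 'M[F]_(n1, n2)) :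
  \sum_(v : 'M[F]_(n1, 1)) ind (v^T <= N^T)%MS = (q ^ \rank N)%:R.
Proof.
rewrite sum_ind.
set B := row_base N^T.
have -> : [set v : 'M[F]_(n1, 1) | (v^T <= N^T)%MS] =
          [set (z *m B)^T | z in [set: 'M[F]_(1, \rank N^T)]].
  apply/setP => v; rewrite inE; apply/idP/imsetP.
    rewrite -(eq_row_base N^T) -/B => /submxP [z hz].
    by exists z; rewrite ?inE // -hz trmxK.
  case=> z _ ->; rewrite trmxK -(eq_row_base N^T) -/B.
  exact: submxMl.
rewrite card_imset; last first.
  by move=> z1 z2 /trmx_inj; apply: row_free_inj; apply: row_base_free.
by rewrite cardsT card_mx mul1n mxrank_tr.
Qed.

Lemma Qshift n1 n2 (N : 'M[F]_(n1, n2)) (v w : 'M[F]_(n1, 1)) (d : F) :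
  (w^T <= N^T)%MS -> ((v + d *: w)^T <= N^T)%MS = (v^T <= N^T)%MS.
Proof.
move=> Qw; rewrite linearD /= linearZ /=; apply/idP/idP => H.
  have -> : v^T = (v^T + d *: w^T) + (- d) *: w^T by rewrite scaleNr addrK.
  by rewrite addmx_sub // scalemx_sub.
by rewrite addmx_sub // scalemx_sub.
Qed.

Lemma shift_v n1 n2 (N : 'M[F]_(n1, n2)) (x : 'M[F]_(1, n1)) (w : 'M[F]_(n1, 1)) (c : F) :
  (w^T <= N^T)%MS -> (x *m w) 0 0 = 1 ->
  \sum_(v : 'M[F]_(n1, 1)) ind (v^T <= N^T)%MS * ind ((x *m v) 0 0 + c != 0) =
  \sum_(v : 'M[F]_(n1, 1)) ind (v^T <= N^T)%MS * ind ((x *m v) 0 0 != 0).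
Proof.
move=> Qw xw; rewrite (reindex_inj (addIr (- (c *: w)))) /=.
apply: eq_bigr => v _; rewrite -scaleNr Qshift //.
have E1 (A B : 'M[F]_1) : (A + B) 0 0 = A 0 0 + B 0 0 by rewrite mxE.
have E2 (d : F) (A : 'M[F]_1) : (d *: A) 0 0 = d * A 0 0 by rewrite mxE.
by rewrite mulmxDr E1 -scalemxAr E2 xw mulr1 subrK.
Qed.

Lemma bilin n1 n2 (N : 'M[F]_(n1, n2)) (c1 c2 : F) :
  \sum_(u : 'M[F]_(1, n2)) \sum_(v : 'M[F]_(n1, 1))
    ind (u <= N)%MS * (ind (v^T <= N^T)%MS *
      (ind ((u *m pinvmx N *m v) 0 0 + c1 != 0) -
       ind ((u *m pinvmx N *m v) 0 0 + c2 != 0))) =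
  (q ^ \rank N)%:R * (ind (c1 != 0) - ind (c2 != 0)).
Proof.
rewrite (bigD1 (0 : 'M_(1, n2))) //= [X in _ + X]big1 ?addr0.
  rewrite sub0mx (eq_bigr (fun v => ind (v^T <= N^T)%MS *
      (ind (c1 != 0) - ind (c2 != 0)))); last first.
    by move=> v _; rewrite /ind /= mul1r !mul0mx mxE !add0r.
  by rewrite -mulr_suml card_cols.
move=> u nz; rewrite -mulr_sumr.
have [P|nP] := boolP (u <= N)%MS; last by rewrite /ind /= mul0r.
set x := u *m pinvmx N.
have hx : x *m N = u by rewrite mulmxKpV.
have [j hj] : exists j, u 0 j != 0.
  apply/existsP; move: nz; apply: contraR; rewrite negb_exists => /forallP H.
  apply/eqP/matrixP => i k; rewrite [RHS]mxE ord1; move: (H k).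
  by rewrite negbK => /eqP.
set w0 := col j N.
have Qw0 : (w0^T <= N^T)%MS by rewrite /w0 colE trmx_mul submxMl.
have xw0 : (x *m w0) 0 0 = u 0 j by rewrite /w0 colE mulmxA hx -colE mxE.
set w := (u 0 j)^-1 *: w0.
have Qw : (w^T <= N^T)%MS by rewrite /w linearZ /= scalemx_sub.
have xw : (x *m w) 0 0 = 1 by rewrite /w -scalemxAr mxE xw0 mulVf.
under eq_bigr => v _ do rewrite mulrBr.
by rewrite sumrB !(shift_v _ Qw xw) subrr mulr0.
Qed.

Lemma ind3 (b1 b2 b3 : bool) (z : rat) :
  ind [&& b1, b2 & b3] * z = ind b3 * (ind b1 * (ind b2 * z)).
Proof. by case: b1; case: b2; case: b3; rewrite /ind /= ?mul0r ?mul1r. Qed.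

Lemma key n1 n2 r s t : (0 < r)%N -> (0 < s)%N ->
  \sum_(M : 'M[F]_(n1.+1, n2.+1)) ind (\rank M <= t)%N *
     (ind (tau r M != 0) - ind (tau s M != 0)) =
  (q ^ t)%:R * (\sum_(N : 'M[F]_(n1, n2)) ind ((\rank N == t) && (tau r.-1 N != 0)) -
                \sum_(N : 'M[F]_(n1, n2)) ind ((\rank N == t) && (tau s.-1 N != 0))).
Proof.
move=> r0 s0; rewrite sum_block.
transitivity (\sum_(N : 'M[F]_(n1, n2)) ind (\rank N == t) *
   ((q ^ \rank N)%:R * (ind (tau r.-1 N != 0) - ind (tau s.-1 N != 0)))).
  apply: eq_bigr => N _; rewrite -bilin mulr_sumr; apply: eq_bigr => u _.
  rewrite mulr_sumr; apply: eq_bigr => v _.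
  rewrite -ind3 -(inner t N u v).
  by apply: eq_bigr => a _; rewrite !tau_block.
rewrite -sumrB mulr_sumr; apply: eq_bigr => N _.
have [E|E] := eqVneq (\rank N) t.
  by rewrite E /ind /= mul1r.
by rewrite /ind /= !mul0r subrr mulr0.
Qed.

Lemma tau0 n1 n2 r : tau r (0 : 'M[F]_(n1, n2)) = 0.
Proof. by rewrite /tau big1 // => i _; rewrite big1 // => j _; rewrite mxE. Qed.

Lemma cumul_one n1 n2 r t (M : 'M[F]_(n1, n2)) :
  \sum_(1 <= k < t.+1) ind ((\rank M == k) && (tau r M != 0)) =
  ind (\rank M <= t)%N * ind (tau r M != 0).
Proof.
have [z|nz] := eqVneq (tau r M) 0.
  by rewrite /ind /= mulr0 big1 // => k _; rewrite andbF.
rewrite /= ?andbT (_ : ind true = 1) ?mulr1 //.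
under eq_bigr => k _ do rewrite andbT.
have rpos : (0 < \rank M)%N.
  rewrite lt0n mxrank_eq0; apply: contra nz => /eqP ->; by rewrite tau0.
elim: t => [|t IH].
  by rewrite big_geq // /ind leqNgt rpos.
rewrite big_nat_recr //= IH /ind.
case: (ltngtP (\rank M) t.+1) => H.
- have h1 : (\rank M <= t)%N by rewrite -ltnS.
  by rewrite h1 ?(ltn_eqF H) ?(ltnW H) /= addr0.
- have h1 : (\rank M <= t)%N = false.
    by apply/negbTE; rewrite -ltnNge (ltn_trans (ltnSn t) H).
  have h2 : (\rank M <= t.+1)%N = false by apply/negbTE; rewrite -ltnNge.
  by rewrite h1 ?h2 ?(gtn_eqF H) /= addr0.
- by rewrite ?H ?ltnn ?leqnn ?eqxx /= add0r.
Qed.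

Lemma hw_sum r t l m :
  hw F r t l m = (\sum_(M : 'M[F]_(l, m)) ind (\rank M <= t)%N * ind (tau r M != 0))
                 / (#|F|.-1)%:R.
Proof.
rewrite /hw /hfrakw -mulr_suml; congr (_ / _).
rewrite /frakw.
under eq_bigr => k _ do rewrite -sum_ind.
rewrite exchange_big /=; apply: eq_bigr => M _.
exact: cumul_one.
Qed.

Lemma hfrakw_sum r t l m :
  hfrakw F r t l m = (\sum_(M : 'M[F]_(l, m)) ind ((\rank M == t) && (tau r M != 0)))
                 / (#|F|.-1)%:R.
Proof. by rewrite /hfrakw /frakw -sum_ind. Qed.

Lemma hfrakw0 t l m : hfrakw F 0 t l m = 0.
Proof.
rewrite /hfrakw /frakw (_ : [set _ | _] = set0) ?cards0 ?mul0r //.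
apply/setP => M; rewrite !inE /tau big_pred0 ?eqxx ?andbF //.
Qed.

Lemma part1 (s r t l m : nat) :
  (1 <= s)%N -> (1 <= r)%N -> (1 <= l)%N -> (1 <= m)%N ->
  hw F r t l m - hw F s t l m =
    (#|F|%:R : rat) ^+ t *
      (hfrakw F r.-1 t l.-1 m.-1 - hfrakw F s.-1 t l.-1 m.-1).
Proof.
move=> s0 r0 hl hm; case: l hl => // n1 _; case: m hm => // n2 _.
rewrite !hw_sum !hfrakw_sum -mulrBl -sumrB.
under eq_bigr => M _ do rewrite -mulrBr.
by rewrite key // -mulrBl natrX mulrA.
Qed.
End Count.

Theorem mainTheorem5 (F : finFieldType) (s r t l m : nat) :
  (1 <= s)%N -> (s <= r)%N -> (r <= l)%N -> (l <= m)%N ->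
  (1 <= t)%N -> (t < l)%N ->
  hw F r t l m - hw F s t l m =
    (#|F|%:R : rat) ^+ t *
      (hfrakw F r.-1 t l.-1 m.-1 - hfrakw F s.-1 t l.-1 m.-1)
  /\
  hw F r t l m - hw F 1 t l m =
    (#|F|%:R : rat) ^+ t * hfrakw F r.-1 t l.-1 m.-1.
Proof.
move=> s1 sr rl lm t1 tl.
have r1 : (1 <= r)%N by apply: leq_trans sr.
have l1 : (1 <= l)%N by apply: leq_trans tl.
have m1 : (1 <= m)%N by apply: leq_trans lm.
split; first exact: part1.
by rewrite part1 // hfrakw0 subr0.
Qed.
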